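(* Let $k_{\max}=k_{\max}(x)$ be a positive-integer-valued function with $\log k_{\max}(x)/\log x\to0$. Choose $m$ uniformly at random from $\{1,\dots,x\}$. For a positive integer $k$ and a prime $p$ let $A_k^p$ be the event that every $f\in[f_{m-k,m}]$ whose tuple satisfies $p\nmid a_0a_k$ is irreducible over $\mathbb{Q}$. Then \[ \lim_{x\to\infty}\mathbb{P}\Big(\bigcup_{p>k_{\max}}\ \bigcap_{k=1}^{k_{\max}}A_k^p\Big)=1, \] where the union is over primes $p>k_{\max}$.
   Context: For integers $0\le n<m$, $f_{n,m}(x)=\sum_{j=n}^{m}\frac{x^{j-n}}{j!}$. For a polynomial $f=\sum_{j=0}^{k}b_jx^j$ with $b_0b_k\ne0$ define $[f]=\{\sum_{j=0}^k a_jb_jx^j:\ a_j\in\mathbb{Z},\ a_0a_k\neq0\}$; each element of $[f]$ comes with its tuple $(a_0,\dots,a_k)$. Events involving $f_{m-k,m}$ are understood to include the requirement $m-k\ge0$. *)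

(* Defs.v *)
From HB Require Import structures.
From mathcomp Require Import all_boot all_order all_algebra.
From mathcomp Require Import all_classical all_reals all_analysis.
Set Implicit Arguments. Unset Strict Implicit. Unset Printing Implicit Defensive.
Import Order.TTheory GRing.Theory Num.Theory.
Local Open Scope ring_scope.

(* Coefficient b_j of f_{m-k,m} = sum_{j=0}^{k} x^j / (m-k+j)! *)
Definition fcoef (m k j : nat) : rat := ((m - k + j)`!)%:R^-1.

Definition fpoly (m k : nat) (a : nat -> int) : {poly rat} :=
  \poly_(j < k.+1) ((a j)%:~R * fcoef m k j).

(* A_k^p for the given m (includes the requirement m - k >= 0). *)
Definition eventA (m k p : nat) : Prop :=
  (k <= m)%N /\
  forall a : nat -> int, a 0%N != 0 -> a k != 0 ->
    ~~ (p%:Z %| a 0%N * a k)%Z -> irreducible_poly (fpoly m k a).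

Definition goodEvent (kmax m : nat) : Prop :=
  exists p : nat, prime p /\ (kmax < p)%N /\
    forall k : nat, (1 <= k <= kmax)%N -> eventA m k p.

Definition probGood (R : realType) (kmax x : nat) : R :=
  (\sum_(1 <= m < x.+1) (`[< goodEvent kmax m >] : nat)%:R) / x%:R.

(* Main.v *)
Require Import Defs.
From HB Require Import structures.
From mathcomp Require Import all_boot all_order all_algebra.
From mathcomp Require Import all_classical all_reals all_analysis.
From mathcomp Require Import zify ring lra.
Import Order.TTheory GRing.Theory Num.Theory.
Local Open Scope ring_scope.
Import numFieldNormedType.Exports.
Local Open Scope classical_set_scope.

Lemma pdvdzM (p : nat) (x y : int) : prime p ->
  (p%:Z %| x * y)%Z = (p%:Z %| x)%Z || (p%:Z %| y)%Z.
Proof. by move=> pp; rewrite !dvdzE abszM /= Euclid_dvdM. Qed.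

Lemma eisen (g q r : {poly int}) (p : nat) :
  prime p -> g = q * r ->
  ~~ (p%:Z %| lead_coef g)%Z ->
  (forall i, (i < (size g).-1)%N -> (p%:Z %| g`_i)%Z) ->
  ~~ ((p%:Z * p%:Z) %| g`_0)%Z ->
  (size q <= 1)%N || (size r <= 1)%N.
Proof.
move=> pp gE hl hi h0.
have q0 : q != 0.
  by apply: contra hl => /eqP q0; rewrite gE q0 mul0r lead_coef0 dvdz0.
have r0 : r != 0.
  by apply: contra hl => /eqP r0; rewrite gE r0 mulr0 lead_coef0 dvdz0.
have [lq lr] : ~~ (p%:Z %| lead_coef q)%Z /\ ~~ (p%:Z %| lead_coef r)%Z.
  by move: hl; rewrite gE lead_coefM pdvdzM // negb_or => /andP.
have exq : exists i, ~~ (p%:Z %| q`_i)%Z by exists (size q).-1.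
have exr : exists i, ~~ (p%:Z %| r`_i)%Z by exists (size r).-1.
case: (ex_minnP exq) => i0 hi0 mi0.
case: (ex_minnP exr) => j0 hj0 mj0.
have i0le : (i0 <= (size q).-1)%N by apply: mi0.
have j0le : (j0 <= (size r).-1)%N by apply: mj0.
have sg : size g = (size q + size r).-1 by rewrite gE size_mul.
have nd : ~~ (p%:Z %| g`_(i0 + j0))%Z.
  rewrite gE coefM (bigD1 (@Ordinal (i0 + j0).+1 i0 (leq_addr j0 i0))) //=.
  set S := \sum_(_ | _) _.
  have dS : (p%:Z %| S)%Z.
    apply: rpred_sum => -[j hj] /= /eqP hne.
    have [ltj|gtj] := ltnP j i0.
      apply: dvdz_mulr; case: (boolP (p%:Z %| q`_j)%Z) => // /mi0 h; exfalso; clear -h ltj; lia.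
    have gtj' : (i0 < j)%N.
      rewrite ltn_neqAle gtj andbT; apply/eqP => e; apply: hne; exact: val_inj.
    apply: dvdz_mull; case: (boolP (p%:Z %| r`_(i0 + j0 - j))%Z) => // /mj0 h; exfalso; clear -h gtj' hj; lia.
  rewrite addKn.
  apply/negP => hd; move: (rpredB hd dS); rewrite addrK pdvdzM //.
  by rewrite (negbTE hi0) (negbTE hj0).
have big : ((size g).-1 <= i0 + j0)%N.
  by rewrite leqNgt; apply/negP => /hi; apply/negP.
case: leqP => // sq; case: leqP => // sr.
have i0p : (0 < i0)%N.
  rewrite sg in big; clear -big i0le j0le sq sr; lia.
have j0p : (0 < j0)%N.
  rewrite sg in big; clear -big i0le j0le sq sr; lia.
have dq0 : (p%:Z %| q`_0)%Z by case: (boolP (p%:Z %| q`_0)%Z) => // /mi0 h; exfalso; clear -h i0p; lia.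
have dr0 : (p%:Z %| r`_0)%Z by case: (boolP (p%:Z %| r`_0)%Z) => // /mj0 h; exfalso; clear -h j0p; lia.
by move: h0; rewrite gE coef0M dvdz_mul.
Qed.

Lemma irr_of_eisen (f : {poly rat}) (c : rat) (g : {poly int}) (p : nat) :
  c != 0 -> c *: f = map_poly (intr : int -> rat) g -> prime p -> (1 < size g)%N ->
  ~~ (p%:Z %| lead_coef g)%Z ->
  (forall i, (i < (size g).-1)%N -> (p%:Z %| g`_i)%Z) ->
  ~~ ((p%:Z * p%:Z) %| g`_0)%Z ->
  irreducible_poly f.
Proof.
move=> c0 cf pp sg hl hi h0.
have sf : size f = size g by rewrite -(size_scale f c0) cf size_rat_int_poly.
split; first by rewrite sf.
move=> q sq qf.
have qg : q %| map_poly (intr : int -> rat) g by rewrite -cf dvdpZr.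
case: (dvdpP_rat_int qg) => q1 [a a0 qE] [r gE].
have g0 : g != 0 by rewrite -size_poly_gt0; lia.
have := @eisen g q1 r p pp gE hl hi h0.
have sq1 : size q = size q1 by rewrite qE size_scale // size_rat_int_poly.
have q10 : size q1 != 0%N.
  apply/negP => /eqP s0; move: qf; rewrite qE.
  have -> : q1 = 0 by apply/eqP; rewrite -size_poly_eq0 s0.
  rewrite map_poly0 scaler0 dvd0p => /eqP f0.
  by move: sf; rewrite f0 size_poly0; lia.
have r0 : r != 0 by apply: contra g0 => /eqP r0; rewrite gE r0 mulr0.
have sr0 : (0 < size r)%N by rewrite size_poly_gt0.
move=> /orP [hq|hr]; first by exfalso; move: sq; rewrite sq1; lia.
have q1n : q1 != 0 by rewrite -size_poly_eq0.
have sr1 : size r = 1%N by lia.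
have : size g = size q1 by rewrite gE size_mul // sr1 addn1.
move=> e; by rewrite -dvdp_size_eqp // sq1 sf e.
Qed.

Lemma ffact_ndvd (m p k : nat) : prime p -> (p %| m)%N -> (k < p)%N -> (k <= m)%N ->
  forall j, (j < k)%N -> ~~ (p %| (m.-1) ^_ j)%N.
Proof.
move=> pp pm kp km; elim=> [|j IH] hj; first by rewrite ffactn0 Euclid_dvd1.
rewrite ffactnSr Euclid_dvdM // negb_or IH ?andTb; last by timeout 20 lia.
apply/negP => hd.
have : (p %| m - (m.-1 - j))%N by apply: dvdn_sub.
have -> : (m - (m.-1 - j) = j.+1)%N by timeout 20 lia.
move=> /dvdn_leq; timeout 20 lia.
Qed.

Lemma goodA (m k p : nat) : prime p -> (k < p)%N -> (0 < k)%N -> (0 < m)%N ->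
  (p %| m)%N -> ~~ (p ^ 2 %| m)%N -> eventA m k p.
Proof.
move=> pp kp k0 m0 pm pm2.
have pm' : (p <= m)%N by apply: dvdn_leq.
have km : (k <= m)%N by timeout 20 lia.
split => // a a0 ak hpa.
pose g : {poly int} := \poly_(j < k.+1) (a j * (m ^_ (k - j))%:Z).
have gk : g`_k = a k by rewrite coef_poly ltnSn subnn ffactn0 mulr1.
have sg : size g = k.+1.
  by rewrite size_poly_eq //= subnn ffactn0 mulr1.
have ff : forall i, (i <= k)%N -> m`! = (m ^_ (k - i) * (m - k + i)`!)%N.
  move=> i ik; rewrite -(ffact_fact (_ : k - i <= m)%N); last by clear -ik km; timeout 20 lia.
  by congr (_ * _`!)%N; clear -ik km; timeout 20 lia.
apply: (@irr_of_eisen _ (m`!)%:R g p).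
- by rewrite pnatr_eq0 -lt0n fact_gt0.
- apply/polyP => i; rewrite coefZ coef_map coef_poly /fpoly coef_poly.
  case: ifP => hik; last by rewrite mulr0.
  rewrite /fcoef (ff i) ?natrM; last by clear -hik; timeout 20 lia.
  have F0 : ((m - k + i)`!)%:R != 0 :> rat by rewrite pnatr_eq0 -lt0n fact_gt0.
  rewrite -[RHS]/(((a i) * (m ^_ (k-i))%:Z)%:~R : rat) intrM -pmulrn; field.
  exact: F0.
- by [].
- by rewrite sg.
- rewrite lead_coefE sg /= gk; apply/negP => h; move: hpa; rewrite pdvdzM // h orbT.
  by [].
- move=> i; rewrite sg /= => ik; rewrite coef_poly ltnS ltnW //.
  apply: dvdz_mull; rewrite dvdzE /=.
  have -> : (k - i = (k - i).-1.+1)%N by clear -ik; timeout 20 lia.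
  by rewrite ffactnS dvdn_mulr.
- rewrite coef_poly /= subn0.
  have -> : (k = (k.-1).+1)%N by clear -k0; timeout 20 lia.
  rewrite ffactnS dvdzE /= abszM /=.
  set F := (m.-1) ^_ (k.-1).
  case/dvdnP: (pm) => m' mE.
  have -> : (`|a 0%N| * (m * F) = (`|a 0%N| * m' * F) * p)%N by rewrite {1}mE; ring.
  rewrite dvdn_pmul2r ?prime_gt0 //.
  rewrite !Euclid_dvdM // !negb_or.
  apply/andP; split; [apply/andP; split|].
  + by move: hpa; rewrite pdvdzM // negb_or dvdzE => /andP [].
  + by apply: contra pm2 => /dvdnP [u mu]; rewrite mE mu expnS expn1 -mulnA dvdn_mull.
  + apply: (@ffact_ndvd m p k) => //; clear -km k0; timeout 20 lia.
Qed.

Section NatPart.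
Local Open Scope nat_scope.

Definition smooth (z m : nat) : bool := all (fun q => q <= z) (primes m).

Lemma sum_divp (p : nat) : 1 < p -> forall K y,
  \sum_(1 <= k < K.+1) y %/ p ^ k <= 2 * (y %/ p).
Proof.
move=> p1; elim=> [|K IH] y; first by rewrite big_geq.
rewrite big_nat_recl //.
have -> : \sum_(1 <= i < K.+1) y %/ p ^ i.+1 = \sum_(1 <= i < K.+1) (y %/ p) %/ p ^ i.
  by apply: eq_bigr => i _; rewrite expnS divnMA.
have := IH (y %/ p); rewrite expn1.
have : 2 * ((y %/ p) %/ p) <= y %/ p.
  have := leq_trunc_div (y %/ p) p; nia.
lia.
Qed.


Definition Nprod z x := \prod_(1 <= m < x.+1) (if smooth z m then m else 1).

Lemma Nprod_gt0 z x : 0 < Nprod z x.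
Proof.
rewrite /Nprod big_seq; elim/big_ind: _ => // [a b|m]; first by rewrite muln_gt0 => ->.
by rewrite mem_index_iota; case: ifP => //; lia.
Qed.

Lemma Nprod_dvd_fact z x : Nprod z x %| x`!.
Proof.
rewrite /Nprod fact_prod; apply: (big_ind2 (fun a b => a %| b)) => //.
  by move=> a b c d; apply: dvdn_mul.
by move=> m _; case: ifP.
Qed.

Lemma Nprod_primes z x p : p \in primes (Nprod z x) -> p <= z.
Proof.
rewrite mem_primes => /and3P [pp _]; rewrite /Nprod big_seq Euclid_dvd_prod //.
apply: contraLR; rewrite -ltnNge => pz.
elim/big_ind: _ => // [a b /negbTE -> /negbTE -> //|m].
rewrite mem_index_iota => /andP [m0 _].
case: ifP => sm; last by rewrite Euclid_dvd1.
apply/negP => pm.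
have : p \in primes m by rewrite mem_primes pp m0.
by move/(allP sm) => /=; lia.
Qed.


Lemma Nprod_dvd z x : 0 < z -> Nprod z x %| (z`!) ^ ((4 * x) %/ z + 1).
Proof.
move=> z0; apply/(dvdn_partP _ (Nprod_gt0 z x)) => p pN.
have pz := @Nprod_primes z x p pN.
move: pN; rewrite mem_primes => /and3P [pp _ _].
have p1 := prime_gt1 pp.
rewrite p_part pfactor_dvdn // ?expn_gt0 ?fact_gt0 // lognX.
apply: (leq_trans (dvdn_leq_log p (fact_gt0 x) (Nprod_dvd_fact z x))).
rewrite !logn_fact //.
apply: (leq_trans (sum_divp p p1 x x)).
have hz : z %/ p <= \sum_(1 <= k < z.+1) z %/ p ^ k.
  by rewrite big_nat_recl // expn1 leq_addr.
apply: (leq_trans _ (leq_mul (leqnn _) hz)).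
have h1 := leq_trunc_div x p.
have h2 := ltn_ceil z (ltnW p1).
have h3 := ltn_ceil (4 * x) z0.
have h4 : 1 <= z %/ p by rewrite divn_gt0 // ltnW.
set a := x %/ p in h1 *; set b := z %/ p in h2 h4 *; set c := (4 * x) %/ z in h3 *.
nia.
Qed.


Lemma Nprod_big z x t :
  t.+1 ^ (\sum_(1 <= m < x.+1) (smooth z m && (t < m))) <= Nprod z x.
Proof.
rewrite /Nprod; elim: x => [|x IH]; first by rewrite !big_geq.
rewrite big_nat_recr // [X in _ <= X]big_nat_recr //= expnD.
apply: leq_mul => //.
case: (smooth z x.+1) => //=.
by case: (ltnP t x.+1) => h; rewrite ?expn1 ?expn0 //; lia.
Qed.

Lemma count_small x t : \sum_(1 <= m < x.+1) (m <= t) <= t.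
Proof.
suff : \sum_(1 <= m < x.+1) (m <= t) <= minn x t by lia.
elim: x => [|x IH]; first by rewrite big_geq.
rewrite (big_nat_recr x.+1) //=; case: (leqP x.+1 t) => h /=; lia.
Qed.

Lemma fact_le_pow z : z`! <= z ^ z.
Proof.
elim: z => // z IH; rewrite factS expnS; apply: leq_mul => //.
apply: (leq_trans IH); case: z IH => // z _; rewrite leq_exp2r //.
Qed.

Lemma smooth_bound z x t : 0 < z ->
  t.+1 ^ (\sum_(1 <= m < x.+1) smooth z m - t) <= z ^ (z * ((4 * x) %/ z + 1)).
Proof.
move=> z0.
have h1 : \sum_(1 <= m < x.+1) smooth z m <=
    \sum_(1 <= m < x.+1) (m <= t) + \sum_(1 <= m < x.+1) (smooth z m && (t < m)).
  rewrite -big_split /=; apply: leq_sum => m _.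
  by case: (smooth z m); case: leqP.
have h2 := count_small x t.
apply: (@leq_trans (t.+1 ^ (\sum_(1 <= m < x.+1) (smooth z m && (t < m))))).
  by apply: leq_pexp2l => //; lia.
apply: (leq_trans (Nprod_big z x t)).
apply: (@leq_trans ((z`!) ^ ((4 * x) %/ z + 1))).
  by apply: dvdn_leq; [rewrite expn_gt0 fact_gt0 | apply: Nprod_dvd].
by rewrite expnM leq_exp2r ?addn1 //; apply: fact_le_pow.
Qed.

End NatPart.

Section NatC.
Local Open Scope nat_scope.

Lemma good_of kmax m p : 0 < m -> prime p -> kmax < p -> p %| m -> ~~ (p ^ 2 %| m) ->
  goodEvent kmax m.
Proof.
move=> m0 pp kp pm pm2; exists p; split => //; split => // k /andP [k1 kk].
apply: goodA => //; timeout 20 lia.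
Qed.

Lemma count_bad kmax z x : kmax <= z ->
  x <= \sum_(1 <= m < x.+1) (`[< goodEvent kmax m >] : nat)
       + \sum_(1 <= m < x.+1) smooth z m + \sum_(z.+1 <= n < x.+1) x %/ n ^ 2.
Proof.
move=> kz.
have -> : \sum_(z.+1 <= n < x.+1) x %/ n ^ 2 =
          \sum_(1 <= m < x.+1) \sum_(z.+1 <= n < x.+1) (n ^ 2 %| m).
  rewrite exchange_big_nat; apply: eq_bigr => n _; exact: divn_count_dvd.
rewrite -!big_split /=.
have hx : x = \sum_(1 <= m < x.+1) 1 by rewrite sum_nat_const_nat muln1 subn1.
rewrite {1}hx big_nat_cond [X in _ <= X]big_nat_cond; apply: leq_sum => m.
rewrite andbT => /andP [m1 mx].
case sm: (smooth z m); first by timeout 20 lia.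
have := negbT sm; rewrite /smooth => /allPn [q qm qz].
move: (qm); rewrite mem_primes => /and3P [qp _ qdm].
case q2: (q ^ 2 %| m).
  rewrite (bigD1_seq q) ?q2 /=; first by timeout 20 lia.
    rewrite mem_index_iota; have := dvdn_leq m1 qdm; timeout 20 lia.
  exact: iota_uniq.
rewrite asboolT; first by timeout 20 lia.
apply: (good_of kmax m q) => //; [lia | by rewrite q2].
Qed.

End NatC.

Section Real.
Variable R : realType.

Lemma natdiv_le (x d : nat) : (0 < d)%N -> ((x %/ d)%N%:R : R) <= x%:R / d%:R.
Proof.
move=> d0; rewrite ler_pdivlMr ?ltr0n // -natrM ler_nat; exact: leq_trunc_div.
Qed.

Lemma inv_step (y : R) : 1 <= y -> ((y + 1) ^+ 2)^-1 <= y^-1 - (y + 1)^-1.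
Proof.
move=> y1.
have y0 : 0 < y by lra.
have ab : y^-1 - (y + 1)^-1 = y^-1 * (y + 1)^-1 by field; lra.
rewrite ab expr2 invfM ler_pM2r ?invr_gt0; last lra.
by rewrite lef_pV2 ?posrE; lra.
Qed.

Lemma tail_inv (z K : nat) : (0 < z)%N ->
  \sum_(z.+1 <= n < (z + K).+1) (((n ^ 2)%N%:R : R))^-1 <= z%:R^-1 - (z + K)%:R^-1.
Proof.
move=> z0; elim: K => [|K IH].
  by rewrite addn0 big_geq // subrr.
rewrite addnS big_nat_recr /=; last by timeout 10 lia.
have := inv_step ((z + K)%:R).
have e1 : (((z + K).+1 ^ 2)%N%:R : R) = ((z + K)%:R + 1) ^+ 2 by rewrite natr1 natrX.
have e2 : ((z + K).+1%:R : R) = (z + K)%:R + 1 by rewrite natr1.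
rewrite e1 e2.
have h1 : (1 : R) <= (z + K)%:R by rewrite ler1n; timeout 10 lia.
move=> /(_ h1) h; lra.
Qed.

Lemma tail_sum (z x : nat) : (0 < z)%N ->
  ((\sum_(z.+1 <= n < x.+1) x %/ n ^ 2)%N%:R : R) <= x%:R / z%:R.
Proof.
move=> z0; rewrite natr_sum.
have [xz|zx] := leqP x z.
  by rewrite big_geq ?ltnS // divr_ge0.
apply: (@le_trans _ _ (\sum_(z.+1 <= n < x.+1) x%:R * ((n ^ 2)%N%:R)^-1)).
  rewrite big_nat_cond [X in _ <= X]big_nat_cond; apply: ler_sum => n /andP [/andP [n1 _] _].
  by apply: natdiv_le; rewrite expn_gt0; timeout 10 lia.
rewrite -mulr_sumr.
have := tail_inv z (x - z) z0; rewrite subnKC; last by timeout 10 lia.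
move=> h; apply: (le_trans (ler_wpM2l (ler0n _ _) h)).
rewrite mulrBr; have : (0 : R) <= x%:R * x%:R^-1 by rewrite mulr_ge0 // invr_ge0.
timeout 20 lra.
Qed.


Lemma smooth_real (z x t : nat) : (0 < z)%N -> (0 < t)%N ->
  ((\sum_(1 <= m < x.+1) smooth z m)%N%:R : R) <=
    t%:R + (z * ((4 * x) %/ z + 1))%N%:R * ln (z%:R) / ln (t.+1%:R).
Proof.
move=> z0 t0.
set S := (\sum_(1 <= m < x.+1) smooth z m)%N.
set c := (z * ((4 * x) %/ z + 1))%N.
have hb := smooth_bound z x t z0; rewrite -/S -/c in hb.
have hR : ((t.+1 ^ (S - t))%N%:R : R) <= (z ^ c)%N%:R by rewrite ler_nat.
rewrite !natrX in hR.
have lt0 : (0 : R) < ln t.+1%:R by apply: ln_gt0; rewrite ltr1n; timeout 10 lia.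
have hl : ln (t.+1%:R ^+ (S - t)) <= ln ((z%:R : R) ^+ c).
  by rewrite ler_ln // posrE exprn_gt0 // ltr0n //; timeout 10 lia.
rewrite !lnXn ?ltr0n // in hl.
rewrite -[_ *+ (S - t)]mulr_natr -[_ *+ c]mulr_natr in hl.
have h2 : ((S - t)%N%:R : R) <= c%:R * ln z%:R / ln t.+1%:R.
  by rewrite ler_pdivlMr // mulrC (mulrC _ (ln _)).
have h3 : (S <= t + (S - t))%N by rewrite -leq_subLR.
have h4 : (S%:R : R) <= t%:R + (S - t)%N%:R by rewrite -natrD ler_nat.
timeout 20 lra.
Qed.

End Real.

Lemma core (R : realType) (X n L a b lt zc : R) : 1 <= n -> 0 <= a -> 0 <= b ->
  40 * n * a + 1 <= L -> 40 * n * b <= L -> 0 <= zc -> zc <= 5 * X -> 0 <= X ->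
  L / 2 <= lt -> zc * (a + b) / lt <= X / n.
Proof.
move=> n1 a0 b0 ha hb zc0 zcX X0 hlt.
rewrite -mulrA in ha; rewrite -mulrA in hb.
have na0 : 0 <= n * a by apply: mulr_ge0; lra.
have nb0 : 0 <= n * b by apply: mulr_ge0; lra.
have lt0 : 0 < lt by lra.
rewrite ler_pdivrMr // mulrAC ler_pdivlMr; last lra.
have h1 : n * (a + b) <= L / 20.
  rewrite mulrDr; lra.
have h2 : zc * (n * (a + b)) <= (5 * X) * (L / 20).
  apply: ler_pM => //; first by apply: mulr_ge0; lra.
have h3 : X * L <= X * (2 * lt) by apply: ler_wpM2l => //; lra.
have e : zc * (a + b) * n = zc * (n * (a + b)) by ring.
rewrite e; apply: (le_trans h2).
have h4 : 0 <= X * lt by apply: mulr_ge0; lra.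
lra.
Qed.

Lemma key (R : realType) (N0 k x : nat) : (0 < N0)%N -> (0 < k)%N ->
  40 * N0%:R * ln (k%:R : R) <= ln (x%:R : R) ->
  40 * N0%:R * ln (N0%:R : R) + 1 <= ln (x%:R : R) ->
  `|1 - probGood R k x| <= 3 / N0%:R.
Proof.
move=> N0p kp hb ha.
set L := ln (x%:R : R) in hb ha.
set n : R := N0%:R.
have n1 : 1 <= n by rewrite /n ler1n.
have a0 : 0 <= ln n by apply: ln_ge0.
have b0 : 0 <= ln (k%:R : R) by apply: ln_ge0; rewrite ler1n.
have na0 : 0 <= n * ln n by apply: mulr_ge0; lra.
have x1 : (1 < x)%N.
  rewrite ltnNge; apply/negP => hx.
  have : L <= 0 by apply: ln_le0; rewrite lern1.
  rewrite -mulrA in ha; lra.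
have xp : (0 < x)%N by clear -x1; lia.
have xN : (N0 < x)%N.
  rewrite ltnNge; apply/negP => hx.
  have : L <= ln n by rewrite ler_ln ?posrE ?ltr0n ?ler_nat //; clear -x1 N0p; lia.
  rewrite -mulrA in ha; have : ln n <= n * ln n by rewrite ler_peMl.
  lra.
set t := (x %/ N0)%N.
have t0 : (0 < t)%N by rewrite divn_gt0 // ltnW.
set z := (N0 * k)%N.
have z0 : (0 < z)%N by rewrite muln_gt0 N0p.
have kz : (k <= z)%N by rewrite leq_pmull.
have hc := count_bad k z x kz.
set G := (\sum_(1 <= m < x.+1) (`[< goodEvent k m >] : nat))%N in hc.
set Sm := (\sum_(1 <= m < x.+1) smooth z m)%N in hc.
set T := (\sum_(z.+1 <= n < x.+1) x %/ n ^ 2)%N in hc.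
have hS := smooth_real R z x t z0 t0; rewrite -/Sm in hS.
have hT := tail_sum R z x z0; rewrite -/T in hT.
have Gx : (G <= x)%N.
  rewrite /G; apply: (@leq_trans (\sum_(1 <= m < x.+1) 1)%N).
    by apply: leq_sum => m _; case: (asbool _).
  by rewrite sum_nat_const_nat muln1 subn1.
have hcR : (x%:R : R) <= G%:R + Sm%:R + T%:R by rewrite -!natrD ler_nat.
have X0 : (0 : R) < x%:R by rewrite ltr0n; clear -x1; lia.
have ePG : probGood R k x = G%:R / x%:R by rewrite /probGood natr_sum.
have ht : (t%:R : R) <= x%:R / n by apply: natdiv_le.
have hz : (x%:R : R) / z%:R <= x%:R / n.
  apply: ler_wpM2l; first exact: ler0n.
  by rewrite lef_pV2 ?posrE ?ltr0n // ler_nat leq_pmulr.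
have lnz : ln (z%:R : R) = ln n + ln (k%:R : R).
  by rewrite /z natrM lnM // posrE ltr0n.
have hsum : ln n + ln (k%:R : R) <= L.
  rewrite -mulrA in ha; rewrite -mulrA in hb.
  have : ln n <= n * ln n by rewrite ler_peMl.
  have : ln (k%:R : R) <= n * ln (k%:R : R) by rewrite ler_peMl.
  lra.
have zxR : (z%:R : R) <= x%:R.
  rewrite -ler_ln ?posrE ?ltr0n //.
  rewrite lnz; exact: hsum.
have zx : (z <= x)%N by rewrite -(ler_nat R).
set c := (z * ((4 * x) %/ z + 1))%N in hS.
have cx : (c%:R : R) <= 5 * x%:R.
  have : (c <= 5 * x)%N.
    rewrite /c mulnDr muln1.
    have := leq_trunc_div (4 * x) z.
    clear -zx; rewrite mulnC; lia.
  by rewrite -(ler_nat R) natrM.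
have hlt : L / 2 <= ln (t.+1%:R : R).
  have h1 : (x%:R : R) / n <= t.+1%:R.
    rewrite ler_pdivrMr ?ltr0n // -natrM ler_nat.
    by apply: ltnW; rewrite /t; apply: ltn_ceil.
  have h2 : ln ((x%:R : R) / n) <= ln (t.+1%:R : R).
    rewrite ler_ln ?posrE ?divr_gt0 ?ltr0n //; clear -x1 N0p; lia.
  rewrite ln_div ?posrE ?ltr0n // -/L in h2.
  rewrite -mulrA in ha.
  have : ln n <= n * ln n by rewrite ler_peMl.
  lra.
have hQ := @core R x%:R n L (ln n) (ln (k%:R : R)) (ln (t.+1%:R : R)) c%:R n1 a0 b0 ha hb (ler0n _ _) cx (ltW X0) hlt.
rewrite -lnz in hQ.
have hGx : (G%:R : R) <= x%:R by rewrite ler_nat.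
have main : (x%:R : R) - G%:R <= 3 * (x%:R / n).
  have e : (c%:R : R) * ln z%:R / ln t.+1%:R = (c%:R * ln z%:R) / ln t.+1%:R by [].
  lra.
rewrite ePG ger0_norm; last first.
  by rewrite subr_ge0 ler_pdivrMr // mul1r.
have xn0 : (x%:R : R) != 0 by exact: lt0r_neq0.
have e : 1 - G%:R / x%:R = ((x%:R : R) - G%:R) / x%:R by field.
rewrite e ler_pdivrMr //.
have -> : 3 / n * x%:R = 3 * (x%:R / n) by rewrite mulrAC mulrA.
exact: main.
Qed.

Theorem proposition3 (R : realType) (kmax : nat -> nat) :
  (forall x : nat, (0 < kmax x)%N) ->
  ((ln ((kmax x)%:R : R) / ln (x%:R : R)) @[x --> \oo] --> (0 : R)) ->
  (probGood R (kmax x) x @[x --> \oo] --> (1 : R)).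
Proof.
move=> kpos hk.
apply/cvgrPdist_le => eps eps0.
pose N0 := (Num.truncn (3 / eps)).+1.
have N0p : (0 < N0)%N by [].
have hN : 3 / N0%:R <= eps.
  have h := truncnS_gt (3 / eps).
  rewrite -/N0 in h.
  rewrite ler_pdivrMr ?ltr0n //.
  rewrite ltr_pdivrMr // in h.
  by rewrite mulrC; apply: ltW.
have d0 : (0 : R) < (40 * N0%:R)^-1 by rewrite invr_gt0 mulr_gt0 ?ltr0n.
have hev := (proj1 (cvgr0Pnorm_le _) hk) _ d0.
pose M : R := 40 * N0%:R * ln N0%:R + 1.
pose X0 := (Num.truncn (expR M)).+1.
near=> x.
have hx1 : (X0 <= x)%N by near: x; exists X0.
have hx2 : `|ln ((kmax x)%:R : R) / ln (x%:R : R)| <= (40 * N0%:R)^-1.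
  by near: x; exact: hev.
apply: le_trans hN.
have M1 : 1 <= M.
  rewrite /M; have : 0 <= ln (N0%:R : R) by apply: ln_ge0; rewrite ler1n.
  move=> h; have : 0 <= 40 * N0%:R * ln (N0%:R : R) by rewrite mulr_ge0 // mulr_ge0.
  lra.
have ha : M <= ln (x%:R : R).
  have h := truncnS_gt (expR M); rewrite -/X0 in h.
  have h2 : expR M <= x%:R by apply: (le_trans (ltW h)); rewrite ler_nat.
  by rewrite -[M]expRK ler_ln ?posrE ?expR_gt0 // (lt_le_trans (expR_gt0 M) h2).
have L0 : 0 < ln (x%:R : R) by lra.
apply: key => //.
move: hx2; rewrite ger0_norm; last first.
  by apply: divr_ge0; [apply: ln_ge0; rewrite ler1n | apply: ltW].
rewrite ler_pdivrMr // => h.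
have e : ln (x%:R : R) = (40 * N0%:R) * ((40 * N0%:R)^-1 * ln (x%:R : R)).
  by field; rewrite pnatr_eq0.
rewrite [X in _ <= X]e; apply: ler_wpM2l; last exact: h.
by rewrite mulr_ge0.
Unshelve. all: by end_near.
Qed.
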